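(* Let $k$ be a field of characteristic $0$, $R=k[x_1,\dots,x_n]$ acting on $S=k[X_1,\dots,X_n]$ by differentiation, and let $\ell\in R_1$. Let $F\in S$ be a homogeneous form such that $R/\operatorname{Ann}(F)$ has the strong Lefschetz property with $\ell$ as a strong Lefschetz element. Then for every $d>0$, the Artinian Gorenstein algebra $R/\operatorname{Ann}(\ell^d\circ F)$ has the strong Lefschetz property.
   Context: $R$ acts on $S$ by $x_i\circ F=\partial F/\partial X_i$, and $\operatorname{Ann}(F)=\{g\in R\mid g\circ F=0\}$. A graded Artinian $k$-algebra $A$ has the strong Lefschetz property, with strong Lefschetz element $\ell\in A_1$, if for all $i$ and $j\ge0$ the multiplication map $\cdot\ell^j\colon A_i\to A_{i+j}$ is injective or surjective. *)

(* Defs.v *)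
From HB Require Import structures.
From mathcomp Require Import all_boot all_order all_algebra.
From mathcomp Require Import mpoly.
Set Implicit Arguments. Unset Strict Implicit. Unset Printing Implicit Defensive.
Import GRing.Theory.
Local Open Scope ring_scope.

(* R = S = {mpoly k[n]}; the variables x_i of R act on S as d/dX_i.
   g o F := sum_m g_m * (d^m F / dX^m). *)
Definition contract (k : fieldType) (n : nat) (g F : {mpoly k[n]}) : {mpoly k[n]} :=
  \sum_(m <- msupp g) g@_m *: F^`M[m].

Definition inAnn (k : fieldType) (n : nat) (F g : {mpoly k[n]}) : Prop :=
  contract g F = 0.

(* A = R/Ann(F), graded pieces A_i = R_i / Ann(F)_i (Ann(F) is homogeneous).
   Multiplication by l^j : A_i -> A_{i+j}, written out on representatives. *)
Definition mul_injective (k : fieldType) (n : nat) (F l : {mpoly k[n]}) (i j : nat) : Prop :=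
  forall g : {mpoly k[n]}, g \is i.-homog -> inAnn F (l ^+ j * g) -> inAnn F g.

Definition mul_surjective (k : fieldType) (n : nat) (F l : {mpoly k[n]}) (i j : nat) : Prop :=
  forall h : {mpoly k[n]}, h \is (i + j)%N.-homog ->
    exists g : {mpoly k[n]}, g \is i.-homog /\ inAnn F (h - l ^+ j * g).

Definition strong_lefschetz_element (k : fieldType) (n : nat) (F l : {mpoly k[n]}) : Prop :=
  l \is 1.-homog /\
  forall i j : nat, mul_injective F l i j \/ mul_surjective F l i j.

Definition has_SLP (k : fieldType) (n : nat) (F : {mpoly k[n]}) : Prop :=
  exists l : {mpoly k[n]}, strong_lefschetz_element F l.

(* Main.v *)
Require Import Defs.
From HB Require Import structures.
From mathcomp Require Import all_boot all_order all_algebra.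
From mathcomp Require Import mpoly.
From mathcomp Require Import ssrcomplements.
From mathcomp Require Import zify.
Import GRing.Theory.
Local Open Scope ring_scope.

Section Aux.
Variables (k : fieldType) (n : nat).
Implicit Types (g h F : {mpoly k[n]}).

Lemma contractE g F K : (msize g <= K)%N ->
  contract g F = \sum_(m : 'X_{1..n < K}) g@_m *: F^`M[m].
Proof.
move=> le_gK; set I : subFinType _ := 'X_{1..n < K}.
rewrite /contract (big_mksub I) ?msupp_uniq //=; first last.
  by move=> x /msize_mdeg_lt /leq_trans; apply.
rewrite big_rmcond //= => j /memN_msupp_eq0 ->.
by rewrite scale0r.
Qed.

Lemma contract0 F : contract 0 F = 0.
Proof. by rewrite /contract msupp0 big_nil. Qed.

Lemma contractD F g h : contract (g + h) F = contract g F + contract h F.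
Proof.
set K := (msize g + msize h + msize (g + h))%N.
rewrite !(contractE _ F K); try (rewrite /K; lia).
rewrite -big_split /=; apply: eq_bigr => m _.
by rewrite mcoeffD scalerDl.
Qed.

Lemma contractZ F c g : contract (c *: g) F = c *: contract g F.
Proof.
rewrite !(contractE _ F (msize g)) //; last first.
  by apply: leq_trans (msizeZ_le _ _) _.
rewrite scaler_sumr; apply: eq_bigr => m _.
by rewrite mcoeffZ scalerA.
Qed.

Lemma contractX F m : contract 'X_[m] F = F^`M[m].
Proof. by rewrite /contract msuppX big_seq1 mcoeffX eqxx scale1r. Qed.

Lemma contract_F0 g : contract g 0 = 0.
Proof.
rewrite /contract big1 // => m _.
by rewrite mderivmE big1 ?scaler0 // => m' _; rewrite mcoeff0 mul0r scale0r.
Qed.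

Lemma contract_sumF g (I : Type) (r : seq I) (P : pred I) (G : I -> {mpoly k[n]}) :
  contract g (\sum_(i <- r | P i) G i) = \sum_(i <- r | P i) contract g (G i).
Proof.
apply: (big_morph (contract g)) => [x y|]; last exact: contract_F0.
rewrite /contract -big_split /=; apply: eq_bigr => m _.
by rewrite mderivmD scalerDr.
Qed.

Lemma contract_ZF g c F : contract g (c *: F) = c *: contract g F.
Proof.
rewrite /contract scaler_sumr; apply: eq_bigr => m _.
by rewrite mderivmZ !scalerA mulrC.
Qed.

Lemma contractM g h F : contract (g * h) F = contract g (contract h F).
Proof.
set K := (msize g + msize h)%N.
rewrite (mpolywME (k := K)) ?leq_addr ?leq_addl //.
rewrite (big_morph (fun x => contract x F) (contractD F) (contract0 F)).
rewrite (contractE _ (contract h F) K) ?leq_addr //.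
rewrite (contractE _ F K) ?leq_addl //.
under [RHS]eq_bigr => m1 _ do rewrite raddf_sum scaler_sumr.
rewrite pair_bigA /=; apply: eq_bigr => -[m1 m2] _ /=.
rewrite contractZ contractX linearZ /= scalerA addmC mderivmDm.
by rewrite -scalerA.
Qed.

End Aux.

Lemma inAnn_contract (k : fieldType) (n : nat) (l F g : {mpoly k[n]}) (d : nat) :
  inAnn (contract (l ^+ d) F) g <-> inAnn F (l ^+ d * g).
Proof. by rewrite /inAnn -contractM mulrC. Qed.

Theorem mainTheorem16 (k : fieldType) (n : nat) (l F : {mpoly k[n]}) (e : nat) :
  [pchar k] =i pred0 ->
  l \is 1.-homog ->
  F \is e.-homog ->
  strong_lefschetz_element F l ->
  forall d : nat, (0 < d)%N -> has_SLP (contract (l ^+ d) F).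
Proof.
move=> _ hl _ [_ SLP] d _; exists l; split=> // i j.
have hld : l ^+ d \is d.-homog by have := dhomogMn d hl; rewrite mul1n.
case: (SLP i (j + d)%N) => [inj|surj]; [left|right].
- move=> g hg /inAnn_contract Hg; apply/inAnn_contract.
  rewrite mulrA -exprD addnC in Hg; have H0 := inj g hg Hg.
  by rewrite /inAnn contractM H0 contract_F0.
- move=> h hh.
  have hh' : l ^+ d * h \is (i + (j + d))%N.-homog.
    by have := dhomogM hld hh; rewrite addnC addnA.
  have [g [hg Hg]] := surj _ hh'.
  exists g; split=> //; apply/inAnn_contract.
  by rewrite mulrBr mulrA -exprD addnC.
Qed.
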